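(* For every integer $n\ge 0$, \[ (x+1)\sum_{k=0}^{n}\binom{n}{k}\,{}_{H}w_{n-k}(x)\,w_{k}(x)={}_{H}w_{n+1}(x)+{}_{H}w_{n}(x)-w_{n+1}(x). \]
   Context: $\genfrac{\{}{\}}{0pt}{}{n}{k}$ denotes the Stirling numbers of the second kind. The geometric polynomials are $w_n(x)=\sum_{k=0}^{n}\genfrac{\{}{\}}{0pt}{}{n}{k}k!\,x^k$ (so $w_0=1$). With $H_k=\sum_{i=1}^k 1/i$, the harmonic geometric polynomials are ${}_{H}w_n(x)=\sum_{k=1}^{n}\genfrac{\{}{\}}{0pt}{}{n}{k}k!\,H_k\,x^k$ (so ${}_Hw_0=0$). *)

(* Defs.v *)
From mathcomp Require Import all_boot all_order all_algebra.
Set Implicit Arguments. Unset Strict Implicit. Unset Printing Implicit Defensive.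
Import Order.TTheory GRing.Theory Num.Theory.
Local Open Scope ring_scope.

Fixpoint stirling2 (n k : nat) : nat :=
  match n, k with
  | 0, 0 => 1
  | 0, _.+1 => 0
  | _.+1, 0 => 0
  | n'.+1, k'.+1 => (k'.+1 * stirling2 n' k'.+1 + stirling2 n' k')%N
  end.

Definition harmonic (R : fieldType) (k : nat) : R :=
  \sum_(1 <= i < k.+1) (i%:R)^-1.

Definition geom_poly (R : fieldType) (n : nat) (x : R) : R :=
  \sum_(0 <= k < n.+1) ((stirling2 n k * k`!)%:R * x ^+ k).

Definition harm_geom_poly (R : fieldType) (n : nat) (x : R) : R :=
  \sum_(1 <= k < n.+1) ((stirling2 n k * k`!)%:R * harmonic R k * x ^+ k).
Arguments harmonic R k : clear implicits.
Arguments geom_poly R n x : clear implicits.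
Arguments harm_geom_poly R n x : clear implicits.

(* Main.v *)
Require Import Defs.
From mathcomp Require Import all_boot all_order all_algebra.
From mathcomp Require Import zify ring lra.
Import GRing.Theory Num.Theory.

Definition a (m n : nat) : nat := (stirling2 n m * m`!)%N.

Lemma st_gt n m : n < m -> stirling2 n m = 0.
Proof.
elim: n m => [|n IH] [|m] //= H.
rewrite IH ?IH //; lia.
Qed.

Lemma a_rec m n : a m n.+1 = m * (a m n + a m.-1 n).
Proof.
case: m => [|m]; rewrite /a /=; first by rewrite mul0n.
rewrite factS. ring.
Qed.

Lemma a0 m : a m 0 = (m == 0%N).
Proof. by case: m. Qed.

Lemma a_gt m n : n < m -> a m n = 0.
Proof. by move=> H; rewrite /a st_gt. Qed.

Lemma conv n p q : \sum_(0 <= j < n.+1) 'C(n, j) * a p j * a q (n - j) = a (p + q) n.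
Proof.
elim: n p q => [|n IH] p q.
  rewrite big_nat1 bin0 mul1n !a0. by case: p; case: q.
rewrite big_nat_recl // bin0 mul1n subn0.
under eq_bigr => j _ do rewrite binS mulnDl mulnDl.
rewrite big_split /= addnA.
have E1 : a p 0 * a q n.+1 + \sum_(0 <= i < n.+1) 'C(n, i.+1) * a p i.+1 * a q (n.+1 - i.+1)
   = \sum_(0 <= i < n.+1) 'C(n, i) * a p i * a q (n.+1 - i).
  rewrite [RHS]big_nat_recl // bin0 mul1n subn0. congr (_ + _).
  rewrite big_nat_recr //= bin_small // !mul0n addn0.
  by apply: eq_bigr => i _.
rewrite E1.
have E2 : \sum_(0 <= i < n.+1) 'C(n, i) * a p i * a q (n.+1 - i) =
   q * (a (p + q) n + a (p + q.-1) n).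
  rewrite -IH -IH mulnDr !big_distrr -big_split /=.
  rewrite big_nat_cond [RHS]big_nat_cond.
  apply: eq_bigr => i /andP [/andP [_ Hi] _].
  rewrite subSn // a_rec. ring.
have E3 : \sum_(0 <= i < n.+1) 'C(n, i) * a p i.+1 * a q (n - i) =
   p * (a (p + q) n + a (p.-1 + q) n).
  rewrite -IH -IH mulnDr !big_distrr -big_split /=.
  apply: eq_bigr => i _.
  rewrite a_rec. ring.
rewrite E2 E3 a_rec; clear E1 E2 E3 IH.
case: p => [|p]; case: q => [|q] //=; rewrite ?addn0 ?add0n ?addnS ?addSn /=; ring.
Qed.

Local Open Scope ring_scope.

Lemma sum_widen (R : nmodType) (f : nat -> R) m n1 n2 : (m <= n1)%N -> (n1 <= n2)%N ->
  (forall i, (n1 <= i < n2)%N -> f i = 0) ->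
  \sum_(m <= i < n1) f i = \sum_(m <= i < n2) f i.
Proof.
move=> h1 h2 hf; rewrite (big_cat_nat h1 h2) /=.
rewrite [X in _ = _ + X]big_nat_cond [X in _ = _ + X]big1 ?addr0 // => i /andP[hi _].
exact: hf.
Qed.

Lemma harm0 (R : fieldType) : harmonic R 0 = 0.
Proof. by rewrite /harmonic big_geq. Qed.

Lemma harmS (R : fieldType) m : harmonic R m.+1 = harmonic R m + (m.+1%:R)^-1.
Proof. by rewrite /harmonic big_nat_recr. Qed.

Lemma Hw_eq (R : fieldType) n x N : (n < N)%N ->
  harm_geom_poly R n x = \sum_(0 <= p < N) (a p n)%:R * harmonic R p * x ^+ p.
Proof.
move=> hN; rewrite /harm_geom_poly (big_ltn (leq_ltn_trans (leq0n n) hN)) harm0 mulr0 mul0r add0r.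
apply: sum_widen => // i /andP [hi _].
by rewrite /a st_gt // mul0n mul0r mul0r.
Qed.

Lemma w_eq (R : fieldType) n x N : (n < N)%N ->
  geom_poly R n x = \sum_(0 <= p < N) (a p n)%:R * x ^+ p.
Proof.
move=> hN; rewrite /geom_poly.
apply: sum_widen => // i /andP [hi _].
by rewrite /a st_gt // mul0n mul0r.
Qed.

Lemma tri (R : comNzRingType) (h g : nat -> R) N :
  \sum_(0 <= p < N) \sum_(0 <= q < N - p) h p * g (p + q)%N
  = \sum_(0 <= m < N) g m * \sum_(0 <= p < m.+1) h p.
Proof.
elim: N => [|N IH]; first by rewrite !big_geq.
rewrite [RHS]big_nat_recr //= -IH.
have -> : \sum_(0 <= p < N.+1) \sum_(0 <= q < N.+1 - p) h p * g (p + q)%N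
   = \sum_(0 <= p < N.+1) (\sum_(0 <= q < N - p) h p * g (p + q)%N + h p * g N).
  apply: eq_big_nat => p /andP [_ hp].
  by rewrite subSn // big_nat_recr //= subnKC.
rewrite big_split /= big_nat_recr //= subnn [X in _ + X + _]big_geq // addr0.
by rewrite mulr_sumr; congr (_ + _); apply: eq_bigr => i _; rewrite mulrC.
Qed.

Lemma cumH (R : numFieldType) m :
  \sum_(0 <= p < m.+1) harmonic R p = m.+1%:R * harmonic R m - m%:R.
Proof.
elim: m => [|m IH]; first by rewrite big_nat1 harm0 mulr0 subr0.
rewrite big_nat_recr //= IH harmS.
have hi : m.+1%:R * (m.+1%:R)^-1 = 1 :> R by rewrite mulfV // pnatr_eq0.
rewrite -!natr1 in hi *.
apply/eqP; rewrite -subr_eq0.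
move: hi; move: (m%:R : R) (harmonic R m) => M H hi.
have -> : (M + 1) * H - M + (H + (M + 1)^-1) - ((M + 1 + 1) * (H + (M + 1)^-1) - (M + 1)) = 1 - (M + 1) * (M + 1)^-1 by ring.
by rewrite hi subrr.
Qed.

Lemma hstep (R : numFieldType) m :
  m.+1%:R * (harmonic R m.+1 - 1) = m.+1%:R * harmonic R m - m%:R :> R.
Proof.
rewrite harmS mulrDr mulrDr mulfV ?pnatr_eq0 // -natr1. ring.
Qed.

Theorem lemma1 (R : numFieldType) (x : R) (n : nat) :
  (x + 1) * \sum_(0 <= k < n.+1)
      ('C(n, k)%:R * harm_geom_poly R (n - k) x * geom_poly R k x)
  = harm_geom_poly R n.+1 x + harm_geom_poly R n x - geom_poly R n.+1 x.
Proof.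
pose g := fun m => (a m n)%:R * x ^+ m.
have L : \sum_(0 <= k < n.+1) ('C(n, k)%:R * harm_geom_poly R (n - k) x * geom_poly R k x)
   = \sum_(0 <= m < n.+1) g m * (m.+1%:R * harmonic R m - m%:R).
  under [RHS]eq_bigr => m _ do rewrite -cumH.
  rewrite -tri.
  transitivity (\sum_(0 <= p < n.+1) \sum_(0 <= q < n.+1) harmonic R p * g (p + q)%N).
    rewrite (eq_big_nat _ _ (F2 := fun k => \sum_(0<=p<n.+1) \sum_(0<=q<n.+1)
        ('C(n,k)%:R * ((a p (n-k))%:R * harmonic R p * x^+p)) * ((a q k)%:R * x^+q))); last first.
      move=> k /andP[_ hk].
      rewrite (Hw_eq R (n - k) x n.+1) ?ltnS ?leq_subr // (w_eq R k x n.+1) //.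
      rewrite (mulr_sumr _ _ _ ('C(n,k)%:R)) mulr_suml.
      by apply: eq_bigr => p _; rewrite mulr_sumr.
    rewrite exchange_big /=; apply: eq_bigr => p _.
    rewrite exchange_big /=; apply: eq_bigr => q _.
    transitivity (\sum_(0<=k<n.+1) (harmonic R p * x^+(p+q)) * (('C(n,k) * a q k * a p (n-k))%N)%:R).
      by apply: eq_bigr => k _; rewrite !natrM exprD; ring.
    by rewrite -mulr_sumr -natr_sum conv /g addnC; ring.
  apply: eq_big_nat => p /andP[_ hp]; symmetry.
  apply: sum_widen => //; first by rewrite leq_subr.
  move=> q /andP[hq _]; rewrite /g a_gt ?mul0r ?mulr0 //; lia.
rewrite L (Hw_eq R n.+1 x n.+2) // (Hw_eq R n x n.+1) // (w_eq R n.+1 x n.+2) //.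
have R1 : \sum_(0 <= m < n.+2) (a m n.+1)%:R * harmonic R m * x ^+ m
      - \sum_(0 <= m < n.+2) (a m n.+1)%:R * x ^+ m
   = \sum_(0 <= m < n.+1) m%:R * (harmonic R m - 1) * g m
     + \sum_(0 <= m < n.+1) m.+1%:R * (harmonic R m.+1 - 1) * (x * g m).
  rewrite -sumrB.
  transitivity (\sum_(0<=m<n.+2) (m%:R * (harmonic R m - 1) * g m
       + m%:R * (harmonic R m - 1) * ((a m.-1 n)%:R * x^+m))).
    by apply: eq_bigr => m _; rewrite a_rec natrM natrD /g; ring.
  rewrite big_split /=; congr (_ + _).
    have g0 : g n.+1 = 0 by rewrite /g a_gt // mul0r.
    by rewrite big_nat_recr //= g0 mulr0 addr0.
  rewrite big_nat_recl //= mul0r mul0r add0r.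
  by apply: eq_bigr => m _; rewrite /g exprS; ring.
rewrite addrAC R1 mulr_sumr -!big_split /=.
apply: eq_bigr => m _.
by rewrite hstep /g -!natr1; ring.
Qed.
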